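(* Let $A\in\Bbbk^{\theta\times\theta}$ be such that $\mathfrak{g}(A)$ is finite dimensional. Then $(\operatorname{ad}e_i)^p=(\operatorname{ad}f_i)^p=0$ on $\mathfrak{g}(A)$ for all $i\in\{1,\dots,\theta\}$.
   Context: $\Bbbk$ algebraically closed of characteristic $p>0$; $A=(a_{jk})$ with $a_{jj}\in\{0,2\}$ and $a_{jk}=0$ iff $a_{kj}=0$ for $j\ne k$. $\mathfrak{g}(A)$ is the contragredient Lie algebra: fix $\mathfrak{h}$ of dimension $2\theta-\operatorname{rank}A$, linearly independent $\xi_1,\dots,\xi_\theta\in\mathfrak{h}^*$, $h_1,\dots,h_\theta\in\mathfrak{h}$ with $\xi_k(h_j)=a_{jk}$; $\mathfrak{g}(A)$ is the Lie algebra generated by $\mathfrak{h}$ and $e_j,f_j$ ($1\le j\le\theta$) with relations $[h,h']=0$, $[h,e_j]=\xi_j(h)e_j$, $[h,f_j]=-\xi_j(h)f_j$, $[e_j,f_k]=\delta_{jk}h_j$, divided by the largest ideal which is graded (for $\deg e_j=1$, $\deg f_j=-1$, $\deg\mathfrak{h}=0$) and meets $\mathfrak{h}$ trivially. *)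

(* Defs.v *)
From HB Require Import structures.
From mathcomp Require Import all_boot all_order all_algebra.
Set Implicit Arguments. Unset Strict Implicit. Unset Printing Implicit Defensive.
Import GRing.Theory.
Local Open Scope ring_scope.

Section Contragredient.
Variables (K : fieldType) (L : vectType K) (br : L -> L -> L).

Definition lie_bracket : Prop :=
  [/\ (forall a x y z, br (a *: x + y) z = a *: br x z + br y z),
      (forall a x y z, br x (a *: y + z) = a *: br x y + br x z),
      (forall x, br x x = 0) &
      (forall x y z, br x (br y z) + br y (br z x) + br z (br x y) = 0)].

Definition lie_closed (S : {vspace L}) : Prop :=
  forall x y, x \in S -> y \in S -> br x y \in S.

Definition lie_ideal (S : {vspace L}) : Prop :=
  forall x y, y \in S -> br x y \in S.

Definition direct_grading (G : int -> {vspace L}) : Prop :=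
  (forall x, exists (s : seq int) (y : int -> L),
      [/\ uniq s, (forall n, y n \in G n) & x = \sum_(n <- s) y n]) /\
  (forall (s : seq int) (y : int -> L), uniq s -> (forall n, y n \in G n) ->
      \sum_(n <- s) y n = 0 -> forall n, n \in s -> y n = 0).

Definition graded_subspace (G : int -> {vspace L}) (I : {vspace L}) : Prop :=
  forall x, x \in I -> exists (s : seq int) (y : int -> L),
      [/\ uniq s, (forall n, y n \in (I :&: G n)%VS) & x = \sum_(n <- s) y n].

(* (L, br) is the contragredient Lie algebra g(A), with Cartan subalgebra h,
   functionals xi_k on h, coroots hv_j, generators e_j, f_j and grading G
   (deg e_j = 1, deg f_j = -1, deg h = 0). *)
Record is_contragredient (theta : nat) (A : 'M[K]_theta) (h : {vspace L})
    (xi : 'I_theta -> L -> K) (hv e f : 'I_theta -> L)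
    (G : int -> {vspace L}) : Prop := {
  cg_lie : lie_bracket;
  cg_dimh : \dim h = (2 * theta - \rank A)%N;
  cg_xi_lin : forall k a x y, x \in h -> y \in h ->
      xi k (a *: x + y) = a * xi k x + xi k y;
  cg_xi_free : forall c : 'I_theta -> K,
      (forall x, x \in h -> \sum_k c k * xi k x = 0) -> forall k, c k = 0;
  cg_hv_in : forall j, hv j \in h;
  cg_xi_hv : forall j k, xi k (hv j) = A j k;
  cg_hh : forall x y, x \in h -> y \in h -> br x y = 0;
  cg_he : forall x j, x \in h -> br x (e j) = xi j x *: e j;
  cg_hf : forall x j, x \in h -> br x (f j) = - (xi j x *: f j);
  cg_ef : forall j k, br (e j) (f k) = if j == k then hv j else 0;
  cg_gen : forall S : {vspace L}, (h <= S)%VS -> (forall j, e j \in S) ->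
      (forall j, f j \in S) -> lie_closed S -> S = fullv;
  cg_grading : direct_grading G;
  cg_Gbr : forall m n x y, x \in G m -> y \in G n -> br x y \in G (m + n)%R;
  cg_e_deg : forall j, e j \in G (1%R : int);
  cg_f_deg : forall j, f j \in G ((-1)%R : int);
  cg_h_deg : (h <= G (0%R : int))%VS;
  cg_max : forall I : {vspace L}, lie_ideal I -> graded_subspace G I ->
      (I :&: h = 0)%VS -> I = 0%VS
}.

End Contragredient.

(* Main.v *)
Require Import Defs.
From HB Require Import structures.
From mathcomp Require Import all_boot all_order all_algebra.
From mathcomp Require Import zify.
From Stdlib Require Import Classical.
Set Implicit Arguments. Unset Strict Implicit. Unset Printing Implicit Defensive.
Import GRing.Theory.
Local Open Scope ring_scope.

Section Generic.
Variables (K : fieldType) (L : vectType K).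

Lemma pred_vspace (P : L -> Prop) : P 0 ->
  (forall a u v, P u -> P v -> P (a *: u + v)) ->
  exists S : {vspace L}, forall x, x \in S <-> P x.
Proof.
move=> P0 PC.
have PD u v : P u -> P v -> P (u + v) by move=> *; rewrite -[u]scale1r; apply: PC.
have PZ a u : P u -> P (a *: u) by move=> *; rewrite -[_ *: u]addr0; apply: PC.
suff: forall k (S : {vspace L}), (\dim (fullv : {vspace L}) - \dim S <= k)%N ->
  (forall x, x \in S -> P x) -> exists S' : {vspace L}, forall x, x \in S' <-> P x.
  by move/(_ _ 0%VS (leqnn _)); apply => x; rewrite memv0 => /eqP ->.
elim=> [|k IH] S hk hS.
- have [H|] := classic (forall x, P x -> x \in S); first by exists S => x; split; auto.
  move=> nH; have [x Hx] := not_all_ex_not _ _ nH; have [Px xS] := imply_to_and _ _ Hx. exfalso; apply: xS.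
  have: S == fullv by rewrite eqEdim subvf /=; lia.
  by move/eqP ->; rewrite memvf.
- have [H|] := classic (forall x, P x -> x \in S); first by exists S => x; split; auto.
  move=> nH; have [x Hx] := not_all_ex_not _ _ nH; have [Px xS] := imply_to_and _ _ Hx.
  have lt : (\dim S < \dim (S + <[x]>)%VS)%N.
    rewrite ltnNge; apply/negP => le; apply: xS.
    have: S == (S + <[x]>)%VS by rewrite eqEdim addvSl.
    by move/eqP ->; apply: (subvP (addvSr S <[x]>%VS)); apply: memv_line.
  have le2 : (\dim (S + <[x]>)%VS <= \dim (fullv : {vspace L}))%N by apply: dimvS; apply: subvf.
  apply: (IH (S + <[x]>)%VS); first by lia.
  move=> z /memv_addP [u uS [v /vlineP [a ->] ->]]; apply: PD; first by apply: hS.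
  by apply: PZ.
Qed.

Lemma vspace_ind (Q : L -> Prop) (U : {vspace L}) : Q 0 ->
  (forall a u v, Q u -> Q v -> Q (a *: u + v)) ->
  (forall b, b \in vbasis U -> Q b) -> forall v, v \in U -> Q v.
Proof.
move=> Q0 QC Qb v /coord_vbasis ->.
elim/big_ind: _ => //.
  by move=> u w Qu Qw; rewrite -[u]scale1r; apply: QC.
move=> i _; rewrite -[_ *: _]addr0; apply: QC => //; apply: Qb; apply: mem_nth.
by rewrite size_tuple.
Qed.

Lemma span_ind (Q : L -> Prop) (X : seq L) : Q 0 ->
  (forall a u v, Q u -> Q v -> Q (a *: u + v)) ->
  (forall b, b \in X -> Q b) -> forall v, v \in <<X>>%VS -> Q v.
Proof.
move=> Q0 QC Qb v.
have -> : X = in_tuple X by [].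
move=> /coord_span ->.
elim/big_ind: _ => //.
  by move=> u w Qu Qw; rewrite -[u]scale1r; apply: QC.
move=> i _; rewrite -[_ *: _]addr0; apply: QC => //; apply: Qb; apply: mem_nth.
by [].
Qed.

End Generic.

Section Bracket.
Variables (K : fieldType) (L : vectType K) (br : L -> L -> L).
Hypothesis Hbr : lie_bracket br.

Lemma br0l z : br 0 z = 0.
Proof.
case: Hbr => H1 _ _ _; have := H1 1 0 0 z; rewrite !scale1r addr0 => H.
by apply: (@addrI _ (br 0 z)); rewrite addr0 -H.
Qed.
Lemma br0r z : br z 0 = 0.
Proof.
case: Hbr => _ H1 _ _; have := H1 1 z 0 0; rewrite !scale1r addr0 => H.
by apply: (@addrI _ (br z 0)); rewrite addr0 -H.
Qed.
Lemma brDl x y z : br (x + y) z = br x z + br y z.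
Proof. by case: Hbr => H1 _ _ _; rewrite -[x]scale1r H1 !scale1r. Qed.
Lemma brDr x y z : br z (x + y) = br z x + br z y.
Proof. by case: Hbr => _ H1 _ _; rewrite -[x]scale1r H1 !scale1r. Qed.
Lemma brZl a x z : br (a *: x) z = a *: br x z.
Proof. by case: Hbr => H1 _ _ _; rewrite -[_ *: x]addr0 H1 br0l addr0. Qed.
Lemma brZr a x z : br z (a *: x) = a *: br z x.
Proof. by case: Hbr => _ H1 _ _; rewrite -[_ *: x]addr0 H1 br0r addr0. Qed.
Lemma brNl x z : br (- x) z = - br x z.
Proof. by rewrite -scaleN1r brZl scaleN1r. Qed.
Lemma brNr x z : br z (- x) = - br z x.
Proof. by rewrite -scaleN1r brZr scaleN1r. Qed.
Lemma brsumr I (s : seq I) (P : pred I) (F : I -> L) z :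
  br z (\sum_(i <- s | P i) F i) = \sum_(i <- s | P i) br z (F i).
Proof. by apply: (big_morph (br z)); [move=> *; apply: brDr | apply: br0r]. Qed.
Lemma brsuml I (s : seq I) (P : pred I) (F : I -> L) z :
  br (\sum_(i <- s | P i) F i) z = \sum_(i <- s | P i) br (F i) z.
Proof. by apply: (big_morph (br^~ z)); [move=> *; apply: brDl | apply: br0l]. Qed.
Lemma brA x y : br x y = - br y x.
Proof.
case: Hbr => _ _ H3 _; have := H3 (x + y).
rewrite brDl !brDr !H3 add0r addr0 => /eqP; rewrite addr_eq0 => /eqP.
by [].
Qed.
Lemma jacobi x y z : br x (br y z) = br (br x y) z + br y (br x z).
Proof.
case: Hbr => _ _ _ H4; have := H4 x y z => /eqP.
rewrite -addrA addr_eq0 => /eqP ->.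
by rewrite (brA z x) (brA z (br x y)) brNr opprD !opprK addrC.
Qed.

Lemma iter_lin n u a x y :
  iter n (br u) (a *: x + y) = a *: iter n (br u) x + iter n (br u) y.
Proof. by elim: n => //= n ->; rewrite brDr brZr. Qed.
Lemma iter0 n u : iter n (br u) 0 = 0.
Proof. by elim: n => //= n ->; rewrite br0r. Qed.
Lemma iterN n u x : iter n (br u) (- x) = - iter n (br u) x.
Proof.
by rewrite -[-x]addr0 -scaleN1r iter_lin iter0 addr0 scaleN1r.
Qed.

Lemma leibniz n u x y : iter n (br u) (br x y) =
  \sum_(i < n.+1) 'C(n, i)%:R *: br (iter i (br u) x) (iter (n - i) (br u) y).
Proof.
elim: n => [|n IH].
  by rewrite big_ord1 /= scale1r.
rewrite [LHS]/= IH brsumr.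
under eq_bigr => i _ do rewrite brZr jacobi scalerDr.
rewrite big_split /=.
rewrite [in RHS]big_ord_recl /= bin0 scale1r.
under [in RHS]eq_bigr => i _ do rewrite /bump /= add1n binS natrD scalerDl subSS.
rewrite big_split /= [X in _ = _ + X]addrC [RHS]addrCA; congr (_ + _).
rewrite big_ord_recl /= bin0 scale1r subn0; congr (_ + _).
rewrite big_ord_recr /= bin_small // scale0r addr0.
apply: eq_bigr => i _; rewrite /bump /= add1n.
have -> : br u (iter (n - i.+1) (br u) y) = iter (n - i.+1).+1 (br u) y by [].
by rewrite subnSK.
Qed.

Lemma leibniz_p p (hp : p \in [pchar K]) u x y :
  iter p (br u) (br x y) = br (iter p (br u) x) y + br x (iter p (br u) y).
Proof.
have pp := pcharf_prime hp.
have [p' ep] : exists p', p = p'.+1 by case: p pp {hp} => // p' _; exists p'.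
subst p.
rewrite leibniz big_ord_recl big_ord_recr /= bin0 scale1r.
rewrite big1 ?add0r.
  by rewrite /bump /= add1n subnn binn scale1r /= addrC.
move=> i _; rewrite /bump /= add1n bin_lt_pcharf_0 ?scale0r //=; have := ltn_ord i; lia.
Qed.

End Bracket.

Section Main.
Variables (K : fieldType) (p : nat) (hp : p \in [pchar K]) (theta : nat)
  (A : 'M[K]_theta) (hA1 : forall j, A j j = 0 \/ A j j = 2)
  (L : vectType K) (br : L -> L -> L) (h : {vspace L})
  (xi : 'I_theta -> L -> K) (hv e f : 'I_theta -> L) (G : int -> {vspace L})
  (HL : is_contragredient br A h xi hv e f G) (i : 'I_theta).

Let Hbr := cg_lie HL.
Let pp := pcharf_prime hp.
Let p2 : (2 <= p)%N. Proof. exact: prime_gt1. Qed.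

Local Notation D := (iter p (br (e i))).

Lemma ad_e_h x : x \in h -> br (e i) x = - (xi i x *: e i).
Proof. by move=> xh; rewrite (brA Hbr) (cg_he HL). Qed.

Lemma ad_e_e a : br (e i) (a *: e i) = 0.
Proof. by rewrite (brZr Hbr); case: Hbr => _ _ -> _; rewrite scaler0. Qed.

Lemma Dh x : x \in h -> D x = 0.
Proof.
move=> xh; have [q ->] : exists q, p = q.+2 by case: p p2 => [|[|q]] // _; exists q.
rewrite !iterSr (ad_e_h xh) (brNr Hbr) ad_e_e oppr0.
exact: (iter0 Hbr).
Qed.

Lemma Df j : D (f j) = 0.
Proof.
have [q ep] : exists q, p = q.+2 by case: p p2 => [|[|q]] // _; exists q.
rewrite ep !iterSr (cg_ef HL).
case: ifP => [_|_]; last by rewrite (br0r Hbr) (iter0 Hbr).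
rewrite ad_e_h ?(cg_hv_in HL) // (cg_xi_hv HL).
case: q ep => [|q] ep.
  have c2 : (2%:R : K) = 0 by rewrite -(pcharf0 hp) ep.
  by case: (hA1 i) => -> /=; rewrite ?scale0r ?oppr0 // c2 scale0r oppr0.
by rewrite iterSr (brNr Hbr) ad_e_e oppr0 (iter0 Hbr).
Qed.

Lemma Dker : (forall j, D (e j) = 0) -> forall x, D x = 0.
Proof.
move=> De.
have [S HS] : exists S : {vspace L}, forall x, x \in S <-> D x = 0.
  apply: pred_vspace; first exact: (iter0 Hbr).
  by move=> a u v Hu Hv; rewrite (iter_lin Hbr) Hu Hv scaler0 addr0.
have SF : S = fullv.
  apply: (cg_gen HL).
  - by apply/subvP => x xh; apply/HS; apply: Dh.
  - by move=> j; apply/HS.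
  - by move=> j; apply/HS; apply: Df.
  move=> x y /HS Hx /HS Hy; apply/HS.
  by rewrite (leibniz_p Hbr hp) Hx Hy (br0l Hbr) (br0r Hbr) addr0.
by move=> x; apply/HS; rewrite SF memvf.
Qed.


Lemma iter_e_deg n j : iter n (br (e i)) (e j) \in G (Posz n.+1).
Proof.
elim: n => [|n IH] /=; first exact: (cg_e_deg HL).
have -> : Posz n.+2 = 1 + Posz n.+1 by rewrite -PoszD.
exact: (cg_Gbr HL (cg_e_deg HL i) IH).
Qed.

Section Ej.
Variable j : 'I_theta.
Let y := D (e j).

Lemma y_h x : x \in h -> br x y = xi j x *: y.
Proof.
move=> xh.
have := leibniz_p Hbr hp (e i) x (e j).
rewrite (Dh xh) (br0l Hbr) add0r (cg_he HL) // => <-.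
by rewrite -[_ *: e j]addr0 (iter_lin Hbr) (iter0 Hbr) addr0.
Qed.

Lemma y_f k : br (f k) y = 0.
Proof.
have := leibniz_p Hbr hp (e i) (f k) (e j).
rewrite Df (br0l Hbr) add0r => <-.
apply: Dh; rewrite (brA Hbr) (cg_ef HL); rewrite memvN.
by case: ifP => _; [apply: (cg_hv_in HL) | apply: mem0v].
Qed.

Fixpoint W (m : nat) : {vspace L} :=
  if m is m'.+1 then
    <<[seq br (e k) b | k <- enum 'I_theta, b <- (vbasis (W m'))]>>%VS
  else <[y]>%VS.

Lemma W_e k m v : v \in W m -> br (e k) v \in W m.+1.
Proof.
move: v; apply: (@vspace_ind _ _ (fun v => br (e k) v \in W m.+1) (W m)).
- by rewrite (br0r Hbr) mem0v.
- by move=> a u w Hu Hw; rewrite (brDr Hbr) (brZr Hbr) memvD // memvZ.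
move=> b bB; apply: memv_span; apply/allpairsP; exists (k, b); split => //.
by rewrite mem_enum.
Qed.

Lemma W_ind m (Q : L -> Prop) : Q 0 ->
  (forall a u v, Q u -> Q v -> Q (a *: u + v)) ->
  (forall k b, b \in W m -> Q (br (e k) b)) -> forall v, v \in W m.+1 -> Q v.
Proof.
move=> Q0 QC Qg; apply: (@span_ind _ _ Q) => // z /allpairsP [[k b] [_ bB ->]] /=.
by apply: Qg; apply: vbasis_mem.
Qed.

Lemma W_h x m v : x \in h -> v \in W m -> br x v \in W m.
Proof.
move=> xh; elim: m v => [|m IH] v.
  by move=> /vlineP [c ->]; rewrite (brZr Hbr) y_h // scalerA memvZ // memv_line.
move: v; apply: W_ind.
- by rewrite (br0r Hbr) mem0v.
- by move=> a u w Hu Hw; rewrite (brDr Hbr) (brZr Hbr) memvD // memvZ.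
move=> k b bW; rewrite (jacobi Hbr) (cg_he HL) // (brZl Hbr).
by rewrite memvD ?memvZ ?W_e ?IH.
Qed.

Lemma W_f k m v : v \in W m -> br (f k) v \in (if m is m'.+1 then W m' else 0%VS).
Proof.
elim: m v => [|m IH] v.
  by move=> /vlineP [c ->]; rewrite (brZr Hbr) y_f scaler0 mem0v.
move: v; apply: W_ind.
- by rewrite (br0r Hbr) mem0v.
- by move=> a u w Hu Hw; rewrite (brDr Hbr) (brZr Hbr) memvD // memvZ.
move=> l b bW; rewrite (jacobi Hbr); apply: memvD.
  apply: W_h => //; rewrite (brA Hbr) (cg_ef HL); rewrite memvN.
  by case: ifP => _; [apply: (cg_hv_in HL) | apply: mem0v].
move: (IH b bW); case: m {IH} bW => [|m] bW.
  by rewrite memv0 => /eqP ->; rewrite (br0r Hbr) mem0v.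
exact: W_e.
Qed.

Lemma W_G m v : v \in W m -> v \in G (Posz (m + p.+1)).
Proof.
elim: m v => [|m IH] v.
  by move=> /vlineP [c ->]; rewrite memvZ // add0n; apply: iter_e_deg.
move: v; apply: W_ind.
- by apply: mem0v.
- by move=> a u w Hu Hw; rewrite memvD // memvZ.
move=> k b bW.
have -> : Posz (m.+1 + p.+1) = 1 + Posz (m + p.+1) by rewrite -PoszD.
exact: (cg_Gbr HL (cg_e_deg HL k) (IH b bW)).
Qed.

Definition V n := (\sum_(m < n) W m)%VS.

Lemma V_S n : V n.+1 = (V n + W n)%VS.
Proof. by rewrite /V big_ord_recr. Qed.

Lemma exN : exists N, (W N <= V N)%VS.
Proof.
apply: NNPP => nex.
have H n : (n <= \dim (V n))%N.
  elim: n => [|n IH] //; rewrite V_S.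
  suff : (\dim (V n) < \dim (V n + W n)%VS)%N by lia.
  rewrite ltnNge; apply/negP => le; apply: nex; exists n.
  have: V n == (V n + W n)%VS by rewrite eqEdim addvSl.
  by move/eqP => ->; apply: addvSr.
have := H (\dim (fullv : {vspace L})).+1.
have : (\dim (V (\dim (fullv : {vspace L})).+1) <= \dim (fullv : {vspace L}))%N.
  by apply: dimvS; apply: subvf.
lia.
Qed.


Section WithN.
Variables (N : nat) (HN : (W N <= V N)%VS).

Lemma W_sub m : (m <= N)%N -> (W m <= V N)%VS.
Proof.
rewrite leq_eqVlt => /orP [/eqP -> // | lt].
by apply: (sumv_sup (Ordinal lt)) => //; apply: subvv.
Qed.

Lemma decompV z : z \in V N ->
  exists vs : 'I_N -> L, (forall m, vs m \in W m) /\ z = \sum_(m < N) vs m.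
Proof. by move=> /memv_sumP [vs Hvs ->]; exists vs; split => // m; apply: Hvs. Qed.

Lemma I_ideal : lie_ideal br (V N).
Proof.
have [S HS] : exists S : {vspace L}, forall x, x \in S <->
    (forall z, z \in V N -> br x z \in V N).
  apply: pred_vspace; first by move=> z _; rewrite (br0l Hbr) mem0v.
  by move=> a u v Hu Hv z zI; rewrite (brDl Hbr) (brZl Hbr) memvD ?memvZ ?Hu ?Hv.
have SF : S = fullv.
  apply: (cg_gen HL).
  - apply/subvP => x xh; apply/HS => z /decompV [vs [Hvs ->]].
    rewrite (brsumr Hbr); apply: memv_suml => m _.
    by apply: (subvP (W_sub (ltnW (ltn_ord m)))); apply: W_h.
  - move=> k; apply/HS => z /decompV [vs [Hvs ->]].
    rewrite (brsumr Hbr); apply: memv_suml => m _.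
    by apply: (subvP (W_sub (ltn_ord m))); apply: W_e.
  - move=> k; apply/HS => z /decompV [vs [Hvs ->]].
    rewrite (brsumr Hbr); apply: memv_suml => m _.
    have := W_f k (Hvs m); case: (nat_of_ord m) (ltn_ord m) => [|m'] lt.
      by rewrite memv0 => /eqP ->; apply: mem0v.
    by apply: (subvP (W_sub _)); lia.
  move=> x1 x2 /HS H1 /HS H2; apply/HS => z zI.
  have E := jacobi Hbr x1 x2 z.
  have -> : br (br x1 x2) z = br x1 (br x2 z) - br x2 (br x1 z) by rewrite E addrK.
  by apply: memvB; [apply: H1; apply: H2 | apply: H2; apply: H1].
move=> x z zI; have : x \in S by rewrite SF memvf.
by move/HS; apply.
Qed.

Definition vsn (vs : 'I_N -> L) m := oapp vs 0 (insub m).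
Definition sdeg := [seq Posz (m + p.+1) | m <- index_iota 0 N].
Definition yd (vs : 'I_N -> L) (n : int) :=
  if n is Posz k then (if (p.+1 <= k)%N then vsn vs (k - p.+1) else 0) else 0.

Lemma sdeg_uniq : uniq sdeg.
Proof.
rewrite map_inj_uniq ?iota_uniq // => a b [] /eqP; rewrite eqn_add2r => /eqP.
by [].
Qed.

Lemma sdeg0 : (0 : int) \notin sdeg.
Proof. by apply/mapP => [[m _]]; rewrite addnS. Qed.

Lemma graded_decomp z : z \in V N -> exists y' : int -> L,
  (forall n, y' n \in (V N :&: G n)%VS) /\ z = \sum_(n <- sdeg) y' n.
Proof.
move=> /decompV [vs [Hvs ->]]; exists (yd vs); split.
  case=> [k|k] /=; last by apply: mem0v.
  case: ifP => le; last by apply: mem0v.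
  rewrite /vsn; case: insubP => [m _ em|_] /=; last by apply: mem0v.
  rewrite memv_cap; apply/andP; split.
    by apply: (subvP (W_sub (ltnW (ltn_ord m)))).
  by have := W_G (Hvs m); rewrite em subnK.
transitivity (\sum_(m < N) vsn vs m).
  by apply: eq_bigr => m _; rewrite /vsn valK.
rewrite /sdeg big_map -(big_mkord xpredT (vsn vs)).
by apply: eq_bigr => m _ /=; rewrite leq_addl addnK.
Qed.


Lemma y_zero : y = 0.
Proof.
have I0 : V N = 0%VS.
  apply: (cg_max HL); first exact: I_ideal.
    move=> z /graded_decomp [y' [Hy' Ez]]; exists sdeg, y'; split => //.
    exact: sdeg_uniq.
  apply/eqP; rewrite -subv0; apply/subvP => z; rewrite memv_cap => /andP [zI zh].
  rewrite memv0; have [y' [Hy' Ez]] := graded_decomp zI.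
  pose y0 (n : int) := if n == 0 then - z else y' n.
  have := (cg_grading HL).2 (0 :: sdeg) y0.
  have U0 : uniq (0 :: sdeg) by rewrite /= sdeg0 sdeg_uniq.
  have G0 : forall n, y0 n \in G n.
    move=> n; rewrite /y0; case: eqP => [->|_].
      by rewrite memvN; apply: (subvP (cg_h_deg HL)).
    by have := Hy' n; rewrite memv_cap => /andP [].
  have S0 : \sum_(n <- 0 :: sdeg) y0 n = 0.
    rewrite big_cons /y0 eqxx.
    rewrite (eq_big_seq y').
      by rewrite -Ez addNr.
    move=> n nI; case: eqP => // en; move: nI; rewrite en.
    by move/negP: sdeg0.
  move=> /(_ U0 G0 S0 0 (mem_head _ _)); rewrite /y0 eqxx => /eqP.
  by rewrite oppr_eq0.
have : y \in V N by apply: (subvP (W_sub (leq0n N))); apply: memv_line.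
by rewrite I0 memv0 => /eqP.
Qed.

End WithN.

Lemma De_j : D (e j) = 0.
Proof. by have [N HN] := exN; apply: (y_zero HN). Qed.

End Ej.

Lemma D_all x : D x = 0.
Proof. by apply: Dker => j; apply: De_j. Qed.

End Main.

Section Swap.
Variables (K : fieldType) (L : vectType K) (br : L -> L -> L) (theta : nat)
  (A : 'M[K]_theta) (h : {vspace L})
  (xi : 'I_theta -> L -> K) (hv e f : 'I_theta -> L) (G : int -> {vspace L}).

Lemma graded_swap (I : {vspace L}) :
  graded_subspace (fun n => G (- n)) I -> graded_subspace G I.
Proof.
move=> HI x /HI [s [y [us Hy ->]]].
exists [seq - n | n <- s], (fun n => y (- n)); split.
- by rewrite map_inj_uniq //; apply: oppr_inj.
- by move=> n; have := Hy (- n); rewrite opprK.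
by rewrite big_map; apply: eq_bigr => n _; rewrite opprK.
Qed.

Lemma direct_swap : direct_grading G -> direct_grading (fun n => G (- n)).
Proof.
case=> [H1 H2]; split.
  move=> x; have [s [y [us Hy ->]]] := H1 x.
  exists [seq - n | n <- s], (fun n => y (- n)); split.
  - by rewrite map_inj_uniq //; apply: oppr_inj.
  - by move=> n; apply: Hy.
  by rewrite big_map; apply: eq_bigr => n _; rewrite opprK.
move=> s y us Hy S0 n ns.
have := H2 [seq - n | n <- s] (fun n => y (- n)).
rewrite map_inj_uniq; last by apply: oppr_inj.
move=> /(_ us).
have Hy' : forall n, y (- n) \in G n by move=> m; have := Hy (- m); rewrite opprK.
move=> /(_ Hy'); rewrite big_map.
have -> : \sum_(i <- s) y (- - i) = 0 by rewrite -[RHS]S0; apply: eq_bigr => m _; rewrite opprK.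
move=> /(_ erefl (- n)); rewrite opprK; apply.
by apply: map_f.
Qed.

Lemma swap_contra : is_contragredient br A h xi hv e f G ->
  is_contragredient br A h (fun k x => - xi k x) (fun j => - hv j) f e
    (fun n => G (- n)).
Proof.
move=> HL.
have xi0 k : xi k 0 = 0.
  have := cg_xi_lin HL k 1 (mem0v h) (mem0v h); rewrite scale1r addr0 mul1r => H.
  by apply: (@addrI _ (xi k 0)); rewrite addr0 -H.
have xiN k v : v \in h -> xi k (- v) = - xi k v.
  move=> vh; rewrite -[-v]addr0 -scaleN1r (cg_xi_lin HL) ?mem0v // xi0 addr0.
  by rewrite mulN1r.
split.
- exact: (cg_lie HL).
- exact: (cg_dimh HL).
- by move=> k a x y xh yh; rewrite (cg_xi_lin HL) // opprD mulrN.
- move=> c Hc k; apply/eqP; rewrite -oppr_eq0; apply/eqP.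
  apply: (cg_xi_free HL (c := fun m => - c m) _ k) => x xh; rewrite -[RHS](Hc x xh).
  by apply: eq_bigr => m _; rewrite mulNr mulrN.
- by move=> j; rewrite memvN; apply: (cg_hv_in HL).
- by move=> j k; rewrite xiN ?(cg_hv_in HL) // opprK (cg_xi_hv HL).
- exact: (cg_hh HL).
- by move=> x j xh; rewrite (cg_hf HL) // scaleNr.
- by move=> x j xh; rewrite (cg_he HL) // scaleNr opprK.
- move=> j k; rewrite (brA (cg_lie HL)) (cg_ef HL) eq_sym.
  by case: eqP => [->|_]; rewrite ?oppr0.
- by move=> S hS fS eS; apply: (cg_gen HL).
- exact: direct_swap (cg_grading HL).
- by move=> m n x y xm yn; rewrite opprD; apply: (cg_Gbr HL).
- exact: (cg_f_deg HL).
- by move=> j; rewrite opprK; apply: (cg_e_deg HL).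
- by rewrite oppr0; apply: (cg_h_deg HL).
move=> I HI gI hI; apply: (cg_max HL) => //.
exact: graded_swap.
Qed.

End Swap.

Theorem lemma4p2 (K : closedFieldType) (p : nat) (hp : p \in [pchar K])
    (theta : nat) (A : 'M[K]_theta)
    (hA1 : forall j, A j j = 0 \/ A j j = 2)
    (hA2 : forall j k, j != k -> (A j k = 0 <-> A k j = 0))
    (L : vectType K) (br : L -> L -> L) (h : {vspace L})
    (xi : 'I_theta -> L -> K) (hv e f : 'I_theta -> L)
    (G : int -> {vspace L})
    (HL : is_contragredient br A h xi hv e f G) :
  forall (i : 'I_theta) (x : L),
    iter p (br (e i)) x = 0 /\ iter p (br (f i)) x = 0.
Proof.
move=> i x; split.
  exact: (D_all hp hA1 HL).
exact: (D_all hp hA1 (swap_contra HL)).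
Qed.
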